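(* Let $\beta\in(0,1)$, $n\ge1$, and $\mathbf{x}_0,\mathbf{x}_1,\dots,\mathbf{x}_n\in\mathbb{R}^d$. Let $q_{n,s}:=\beta^{n-s}\frac{1-\beta}{1-\beta^n}$ ($s=1,\dots,n$), let $\mathbf{X}_n$ be the random vector equal to $\mathbf{x}_s$ with probability $q_{n,s}$, and $\overline{\mathbf{x}}_n:=\mathbb{E}[\mathbf{X}_n]$. Then $$\mathbb{E}_{\mathbf{X}_n}\|\mathbf{X}_n-\overline{\mathbf{x}}_n\|^2\le2\sum_{t=1}^n\lambda_{n,t}\|\mathbf{x}_t-\mathbf{x}_{t-1}\|^2,\qquad\text{where }\lambda_{n,t}:=\sum_{i=t}^n\sum_{j=1}^{t-1}q_{n,i}q_{n,j}(i-j).$$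
   Context: Norms are Euclidean. An empty sum equals $0$. *)

(* Defs.v *)
From mathcomp Require Import all_boot all_order all_algebra.
Set Implicit Arguments. Unset Strict Implicit. Unset Printing Implicit Defensive.
Import Order.TTheory GRing.Theory Num.Theory.
Local Open Scope ring_scope.

Definition sqnorm (R : realFieldType) (d : nat) (v : 'rV[R]_d) : R :=
  \sum_(i < d) (v 0 i) ^+ 2.

Definition qw (R : realFieldType) (beta : R) (n s : nat) : R :=
  beta ^+ (n - s) * (1 - beta) / (1 - beta ^+ n).

Definition xbar (R : realFieldType) (d : nat) (beta : R) (n : nat)
  (x : nat -> 'rV[R]_d) : 'rV[R]_d :=
  \sum_(1 <= s < n.+1) qw beta n s *: x s.

Definition variance (R : realFieldType) (d : nat) (beta : R) (n : nat)
  (x : nat -> 'rV[R]_d) : R :=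
  \sum_(1 <= s < n.+1) qw beta n s * sqnorm (x s - xbar beta n x).

Definition lam (R : realFieldType) (beta : R) (n t : nat) : R :=
  \sum_(t <= i < n.+1) \sum_(1 <= j < t)
     qw beta n i * qw beta n j * (i%:R - j%:R).

(* Main.v *)
Require Import Defs.
From mathcomp Require Import all_boot all_order all_algebra.
From mathcomp Require Import ring lra.
Import Order.TTheory GRing.Theory Num.Theory.
Local Open Scope ring_scope.

Section S.
Variable R : realFieldType.

Lemma step_ineq (P W Q w a : R) : 0 <= W -> 0 <= Q -> 0 <= w -> P ^+ 2 <= W * Q ->
  (P + w * a) ^+ 2 <= (W + w) * (Q + w * a ^+ 2).
Proof.
move=> W0 Q0 w0 H.
have key : 2 * P * a <= W * a ^+ 2 + Q.
  have [Wp|] := ltP 0 W.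
    have : 0 <= W * (W * a ^+ 2 + Q - 2 * P * a).
      have -> : W * (W * a ^+ 2 + Q - 2 * P * a) = (W * a - P) ^+ 2 + (W * Q - P ^+ 2) by ring.
      by apply: addr_ge0; [exact: sqr_ge0| rewrite subr_ge0].
    rewrite pmulr_rge0 // subr_ge0 //.
  move=> Wle; have W0' : W = 0 by apply/eqP; rewrite eq_le Wle W0.
  move: H; rewrite W0' mul0r => H.
  have P0 : P = 0 by apply/eqP; rewrite -sqrf_eq0 eq_le H sqr_ge0.
  by rewrite P0 !mulr0 !mul0r !add0r.
have : 0 <= w * (W * a ^+ 2 + Q - 2 * P * a) by rewrite mulr_ge0 // subr_ge0.
move=> H2.
have E : (W + w) * (Q + w * a ^+ 2) - (P + w * a) ^+ 2 =
   (W * Q - P ^+ 2) + w * (W * a ^+ 2 + Q - 2 * P * a) by ring.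
rewrite -subr_ge0 E; apply: addr_ge0 => //; by rewrite subr_ge0.
Qed.

Lemma cs (r : seq nat) (w a : nat -> R) : (forall k, 0 <= w k) ->
  (\sum_(k <- r) w k * a k) ^+ 2 <= (\sum_(k <- r) w k) * (\sum_(k <- r) w k * a k ^+ 2).
Proof.
move=> w0; elim: r => [|k r IH]; first by rewrite !big_nil mul0r expr0n.
rewrite !big_cons.
have -> : w k * a k + \sum_(j <- r) w j * a j = \sum_(j <- r) w j * a j + w k * a k by rewrite addrC.
have -> : w k + \sum_(j <- r) w j = \sum_(j <- r) w j + w k by rewrite addrC.
have -> : w k * a k ^+ 2 + \sum_(j <- r) w j * a j ^+ 2 = \sum_(j <- r) w j * a j ^+ 2 + w k * a k ^+ 2 by rewrite addrC.
apply: step_ineq => //.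
- by apply: sumr_ge0.
- by apply: sumr_ge0 => j _; rewrite mulr_ge0 // sqr_ge0.
Qed.

Lemma jensen (r : seq nat) (w y : nat -> R) (c : R) : (forall k, 0 <= w k) ->
  \sum_(k <- r) w k = 1 ->
  (c - \sum_(k <- r) w k * y k) ^+ 2 <= \sum_(k <- r) w k * (c - y k) ^+ 2.
Proof.
move=> w0 w1.
have -> : c - \sum_(k <- r) w k * y k = \sum_(k <- r) w k * (c - y k).
  rewrite -[c in LHS]mulr1 -w1 mulr_sumr -sumrB; apply: eq_bigr => k _; ring.
by have := cs r w (fun k => c - y k) w0; rewrite w1 mul1r.
Qed.

Lemma split_ind (n i j : nat) (F : nat -> R) : (1 <= j)%N -> (j <= i)%N -> (i <= n)%N ->
  \sum_(1 <= t < n.+1) (if (j < t)%N && (t <= i)%N then F t else 0) =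
  \sum_(j.+1 <= t < i.+1) F t.
Proof.
move=> j1 ji inn.
rewrite (big_cat_nat _ (n := j.+1)) //=; last by rewrite ltnS; apply: leq_trans inn.
rewrite (big_cat_nat _ (m := j.+1) (n := i.+1)) //=.
rewrite big1_seq ?add0r; last first.
  move=> t; rewrite mem_index_iota => /andP [_ /andP [_ H]].
  have -> : (j < t)%N = false by rewrite ltnNge -ltnS H.
  by [].
rewrite [X in _ + X]big1_seq ?addr0; last first.
  move=> t; rewrite mem_index_iota => /andP [_ /andP [H _]].
  have -> : (t <= i)%N = false by rewrite leqNgt H.
  by rewrite andbF.
apply: eq_big_seq => t; rewrite mem_index_iota => /andP [H1 H2].
by rewrite H1 -ltnS H2.
Qed.

Lemma pair_bound (y : nat -> R) (n i j : nat) : (1 <= j)%N -> (j <= i)%N -> (i <= n)%N ->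
  (y i - y j) ^+ 2 <= (i%:R - j%:R) *
    \sum_(1 <= t < n.+1) (if (j < t)%N && (t <= i)%N then (y t - y t.-1) ^+ 2 else 0).
Proof.
move=> j1 ji inn; rewrite split_ind //.
have -> : y i - y j = \sum_(j.+1 <= t < i.+1) 1 * (y t - y t.-1).
  rewrite big_add1 /= -(telescope_sumr _ ji); apply: eq_bigr => k _; by rewrite mul1r.
have -> : (i%:R - j%:R : R) = \sum_(j.+1 <= t < i.+1) (1 : R).
  by rewrite sumr_const_nat subSS -natrB.
have := cs (index_iota j.+1 i.+1) (fun _ => 1) (fun t => y t - y t.-1) (fun _ => ler01).
by under [X in _ <= _ * X -> _]eq_bigr do rewrite mul1r.
Qed.

Lemma widen1 (a b c : nat) (F : nat -> R) : (a <= b)%N -> (b <= c)%N ->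
  \sum_(b <= i < c) F i = \sum_(a <= i < c) (if (b <= i)%N then F i else 0).
Proof.
move=> ab bc; rewrite [RHS](big_cat_nat ab bc) /= [X in _ = X + _]big1_seq ?add0r.
  by apply: eq_big_seq => i; rewrite mem_index_iota => /andP [-> _].
move=> i /andP [_]; rewrite mem_index_iota => /andP [_ H].
by rewrite leqNgt H.
Qed.

Lemma widen2 (a b c : nat) (F : nat -> R) : (b <= c)%N ->
  \sum_(a <= i < b) F i = \sum_(a <= i < c) (if (i < b)%N then F i else 0).
Proof. by move=> bc; rewrite (big_nat_widen _ _ _ _ _ bc) big_mkcond. Qed.

Definition Lw (w : nat -> R) (n t : nat) : R :=
  \sum_(t <= i < n.+1) \sum_(1 <= j < t) w i * w j * (i%:R - j%:R).

Lemma scalar_main (w y : nat -> R) (n : nat) : (forall k, 0 <= w k) ->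
  \sum_(1 <= s < n.+1) w s = 1 ->
  \sum_(1 <= s < n.+1) w s * (y s - \sum_(1 <= j < n.+1) w j * y j) ^+ 2 <=
  2 * \sum_(1 <= t < n.+1) Lw w n t * (y t - y t.-1) ^+ 2.
Proof.
move=> w0 w1.
set D := fun t => (y t - y t.-1) ^+ 2.
set B := fun i j => (i%:R - j%:R) *
    \sum_(1 <= t < n.+1) (if (j < t)%N && (t <= i)%N then D t else 0).
have pb : forall i j, (1 <= i <= n)%N -> (1 <= j <= n)%N ->
    (y i - y j) ^+ 2 <= B i j + B j i.
  move=> i j /andP [i1 iN] /andP [j1 jN]; rewrite /B.
  have [ji|ij] := leqP j i.
    rewrite [X in _ + _ * X]big1 ?mulr0 ?addr0; first exact: pair_bound.
    move=> t _; case: ifP => // /andP [H1 H2].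
    by move: (leq_trans H1 (leq_trans H2 ji)); rewrite ltnn.
  rewrite [X in _ * X + _]big1 ?mulr0 ?add0r.
    have -> : (y i - y j) ^+ 2 = (y j - y i) ^+ 2 by ring.
    by apply: pair_bound => //; apply: ltnW.
  move=> t _; case: ifP => // /andP [H1 H2].
  by move: (leq_trans H1 (leq_trans H2 (ltnW ij))); rewrite ltnn.
apply: (@le_trans _ _ (\sum_(1 <= s < n.+1) w s * \sum_(1 <= j < n.+1) w j * (y s - y j) ^+ 2)).
  by apply: ler_sum => s _; apply: ler_wpM2l => //; apply: jensen.
apply: (@le_trans _ _ (\sum_(1 <= s < n.+1) \sum_(1 <= j < n.+1) w s * w j * (B s j + B j s))).
  apply: ler_sum_nat => s Hs; rewrite mulr_sumr; apply: ler_sum_nat => j Hj.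
  rewrite -mulrA; apply: ler_wpM2l => //; apply: ler_wpM2l => //.
  by apply: pb; rewrite -ltnS.
have -> : \sum_(1 <= s < n.+1) \sum_(1 <= j < n.+1) w s * w j * (B s j + B j s) =
   2 * \sum_(1 <= s < n.+1) \sum_(1 <= j < n.+1) w s * w j * B s j.
  under eq_bigr do under eq_bigr do rewrite mulrDr.
  under eq_bigr do rewrite big_split /=.
  rewrite big_split /=.
  rewrite [X in _ + X = _](exchange_big) /=.
  rewrite mulr_natl mulr2n; congr (_ + _).
  by apply: eq_bigr => i _; apply: eq_bigr => j _; rewrite [w j * w i]mulrC.
rewrite ler_wpM2l // le_eqVlt; apply/orP; left; apply/eqP.
rewrite /B.
under eq_bigr do under eq_bigr do rewrite mulrA mulr_sumr.
under eq_bigr do rewrite exchange_big /=.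
rewrite exchange_big /=.
apply: eq_big_nat => t /andP [t1 tn].
rewrite /Lw mulr_suml (widen1 _ _ _ _ t1 (ltnW tn)) /=.
apply: eq_big_nat => i _.
rewrite (widen2 _ _ _ _ (ltnW tn)) mulr_suml /=.
case: ifP => ti; last first.
  by apply: big1 => j _; rewrite andbF mulr0.
apply: eq_big_nat => j _; rewrite andbT /D.
by case: ifP => _; rewrite ?mulr0 ?mul0r.
Qed.
End S.
Arguments Lw {R}.
Arguments scalar_main {R}.

Lemma geom_sum (R : realFieldType) (beta : R) (n : nat) :
  \sum_(1 <= s < n.+1) beta ^+ (n - s) * (1 - beta) = 1 - beta ^+ n.
Proof.
elim: n => [|n IH].
 by rewrite big_geq // expr0 subrr.
rewrite big_nat_recr /=; last by [].
rewrite subnn expr0 mul1r.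
have -> : \sum_(1 <= s < n.+1) beta ^+ (n.+1 - s) * (1 - beta) =
          beta * \sum_(1 <= s < n.+1) beta ^+ (n - s) * (1 - beta).
  rewrite mulr_sumr; apply: eq_big_nat => s /andP [_ sn].
  have e : (n.+1 - s = (n - s).+1)%N by apply: subSn; rewrite -ltnS.
  by rewrite e exprS mulrA.
rewrite IH exprS mulrBr mulr1 addrC addrA subrK.
by [].
Qed.


Lemma qw_ge0 (R : realFieldType) (beta : R) (n s : nat) :
  0 < beta -> beta < 1 -> 0 <= qw beta n s.
Proof.
move=> b0 b1; rewrite /qw; apply: divr_ge0.
  by apply: mulr_ge0; [apply: exprn_ge0; apply: ltW | rewrite subr_ge0 ltW].
by rewrite subr_ge0; apply: exprn_ile1; apply: ltW.
Qed.

Lemma qw_sum (R : realFieldType) (beta : R) (n : nat) :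
  0 < beta -> beta < 1 -> (1 <= n)%N -> \sum_(1 <= s < n.+1) qw beta n s = 1.
Proof.
move=> b0 b1 n1; rewrite /qw -mulr_suml geom_sum divff //.
rewrite subr_eq0 eq_sym lt_eqF //.
by rewrite exprn_ilt1 ?ltW // -lt0n.
Qed.

Theorem proposition4 (R : realFieldType) (d : nat) (beta : R) (n : nat)
  (x : nat -> 'rV[R]_d) :
  0 < beta -> beta < 1 -> (1 <= n)%N ->
  variance beta n x <=
    2 * \sum_(1 <= t < n.+1) lam beta n t * sqnorm (x t - x t.-1).
Proof.
move=> b0 b1 n1.
rewrite /variance /sqnorm.
have -> : \sum_(1 <= s < n.+1) qw beta n s * (\sum_(i < d) (x s - xbar beta n x) 0 i ^+ 2)
  = \sum_(i < d) \sum_(1 <= s < n.+1) qw beta n s *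
       (x s 0 i - \sum_(1 <= j < n.+1) qw beta n j * x j 0 i) ^+ 2.
  rewrite exchange_big /=; apply: eq_bigr => s _; rewrite mulr_sumr; apply: eq_bigr => i _.
  rewrite /xbar !mxE summxE; congr (_ * (_ - _) ^+ _); apply: eq_bigr => j _; by rewrite !mxE.
have -> : \sum_(1 <= t < n.+1) lam beta n t * (\sum_(i < d) (x t - x t.-1) 0 i ^+ 2)
  = \sum_(i < d) \sum_(1 <= t < n.+1) Lw (qw beta n) n t * (x t 0 i - x t.-1 0 i) ^+ 2.
  rewrite exchange_big /=; apply: eq_bigr => t _; rewrite mulr_sumr; apply: eq_bigr => i _.
  by rewrite !mxE.
rewrite mulr_sumr; apply: ler_sum => i _.
apply: (scalar_main (qw beta n) (fun s => x s 0 i)).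
  by move=> k; apply: qw_ge0.
exact: qw_sum.
Qed.
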